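(* For all integers $m,n\ge 0$ and every $\sigma>0$, $$0<\Lambda_{m,n}(\sigma)-\Lambda_{m,n}(0)<\frac{4}{r}\sigma .$$
   Context: Fix $r>0$ (the inradius of an equilateral triangle $T$). For integers $m,n\ge0$ and $\sigma\ge0$, let $(L,M,N)$ with $L\in(-\pi/2,0]$ and $M,N\in[0,\pi/2)$ be the unique solution of the system $$\big(2L-M-N-(m+n)\pi\big)\tan L=3r\sigma,\quad \big(2M-N-L+m\pi\big)\tan M=3r\sigma,\quad \big(2N-L-M+n\pi\big)\tan N=3r\sigma .$$ Set $\mu=\frac{2M-N-L}{\pi}+m$, $\nu=\frac{2N-L-M}{\pi}+n$, and $\Lambda_{m,n}(\sigma)=\frac{4\pi^2}{27r^2}(\mu^2+\mu\nu+\nu^2)$. In particular $\Lambda_{m,n}(0)=\frac{4\pi^2}{27r^2}(m^2+mn+n^2)$. (By McCartin's theorem the Robin spectrum of $T$ with parameter $\sigma$ consists of the numbers $\Lambda_{m,n}(\sigma)$, $0\le m\le n$, with $\Lambda_{m,n}$ counted twice for $m<n$ and once for $m=n$.) *)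

(* Defs.v *)
From Stdlib Require Import Reals Lra.
Open Scope R_scope.

(* (L,M,N) solves McCartin's Robin system for the equilateral triangle of
   inradius r, Robin parameter sigma, and indices m n, with
   L in (-pi/2, 0], M, N in [0, pi/2). *)
Definition robin_sol (r sigma : R) (m n : nat) (L M N : R) : Prop :=
  - PI / 2 < L <= 0 /\ 0 <= M < PI / 2 /\ 0 <= N < PI / 2 /\
  (2 * L - M - N - (INR m + INR n) * PI) * tan L = 3 * r * sigma /\
  (2 * M - N - L + INR m * PI) * tan M = 3 * r * sigma /\
  (2 * N - L - M + INR n * PI) * tan N = 3 * r * sigma.

Definition mu_of (m : nat) (L M N : R) : R := (2 * M - N - L) / PI + INR m.
Definition nu_of (n : nat) (L M N : R) : R := (2 * N - L - M) / PI + INR n.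

Definition Lambda_form (r mu nu : R) : R :=
  4 * PI ^ 2 / (27 * r ^ 2) * (mu ^ 2 + mu * nu + nu ^ 2).

Definition Lambda_at (r : R) (m n : nat) (L M N : R) : R :=
  Lambda_form r (mu_of m L M N) (nu_of n L M N).

Definition Lambda0 (r : R) (m n : nat) : R := Lambda_form r (INR m) (INR n).

(* Main.v *)
Require Import Defs.
From Stdlib Require Import Reals Lra Psatz.
Open Scope R_scope.

Lemma tan_ge_id y : 0 <= y < PI / 2 -> y <= tan y.
Proof.
  intros [H0 H1].
  destruct (Req_dec y 0) as [->|Hy]; [rewrite tan_0; lra|].
  assert (Hpi : 0 < PI) by apply PI_RGT_0.
  destruct (MVT_cor2 tan (fun c => 1 + tan c ^ 2) 0 y) as [c [Hc1 Hc2]].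
  - lra.
  - intros c Hc. assert (Pr : -PI/2 < c < PI/2) by lra.
    apply derive_pt_eq_1 with (derivable_pt_tan c Pr).
    apply derive_pt_tan.
  - rewrite tan_0 in Hc1. assert (0 <= tan c ^ 2) by (apply pow2_ge_0). nra.
Qed.

Theorem mainTheorem2 (r : R) (m n : nat) (sigma L M N : R) :
  0 < r -> 0 < sigma ->
  robin_sol r sigma m n L M N ->
  0 < Lambda_at r m n L M N - Lambda0 r m n < 4 / r * sigma.
Proof.
  intros Hr Hs [HL [HM [HN [Ea [Eb Ec]]]]].
  assert (Hpi : 0 < PI) by apply PI_RGT_0.
  assert (Hm : 0 <= INR m) by apply pos_INR.
  assert (Hn : 0 <= INR n) by apply pos_INR.
  set (s := 3 * r * sigma) in *.
  assert (Hs' : 0 < s) by (unfold s; nra).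
  set (b := 2 * M - N - L + INR m * PI) in *.
  set (c := 2 * N - L - M + INR n * PI) in *.
  assert (Ha : 2 * L - M - N - (INR m + INR n) * PI = - (b + c)) by (unfold b, c; ring).
  rewrite Ha in Ea.
  assert (tM : 0 <= tan M).
  { destruct (Req_dec M 0) as [->|H]; [rewrite tan_0; lra|]. left; apply tan_gt_0; lra. }
  assert (tN : 0 <= tan N).
  { destruct (Req_dec N 0) as [->|H]; [rewrite tan_0; lra|]. left; apply tan_gt_0; lra. }
  assert (HL0 : L < 0).
  { destruct (Req_dec L 0) as [->|H]; [rewrite tan_0 in Ea; lra|lra]. }
  assert (tL : tan L < 0) by (apply tan_lt_0; lra).
  assert (tMp : 0 < tan M) by (destruct tM as [?|E]; [lra| rewrite <- E in Eb; lra]).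
  assert (tNp : 0 < tan N) by (destruct tN as [?|E]; [lra| rewrite <- E in Ec; lra]).
  assert (Hb : 0 < b) by nra.
  assert (Hc : 0 < c) by nra.
  assert (iM : M <= tan M) by (apply tan_ge_id; lra).
  assert (iN : N <= tan N) by (apply tan_ge_id; lra).
  assert (iL : - L <= - tan L).
  { rewrite <- tan_neg. apply tan_ge_id; lra. }
  set (u := 2 * M - N - L).
  set (v := 2 * N - L - M).
  assert (Qp : 0 < u * u + u * v + v * v).
  { assert (0 < u + v) by (unfold u, v; lra). nra. }
  set (E := b * b + b * c + c * c - PI ^ 2 * (INR m * INR m + INR m * INR n + INR n * INR n)).
  assert (Eid : E = INR m * PI * (3 * M - 3 * L) + INR n * PI * (3 * N - 3 * L)
                    + (u * u + u * v + v * v)) by (unfold E, b, c, u, v; ring).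
  assert (Eid2 : E = 3 * (b * (M - L) + c * (N - L)) - (u * u + u * v + v * v))
    by (unfold E, b, c, u, v; ring).
  assert (E1 : 0 < E).
  { rewrite Eid. assert (0 <= INR m * PI * (3 * M - 3 * L)) by (apply Rmult_le_pos; nra).
    assert (0 <= INR n * PI * (3 * N - 3 * L)) by (apply Rmult_le_pos; nra). lra. }
  assert (E2 : E < 9 * s).
  { rewrite Eid2.
    assert (b * M <= s) by (rewrite <- Eb; nra).
    assert (c * N <= s) by (rewrite <- Ec; nra).
    assert ((b + c) * (- L) <= s) by (rewrite <- Ea; nra).
    assert (b*(M-L)+c*(N-L) = b*M + c*N + (b+c)*(-L)) by ring. clearbody E u v b c s. lra. }
  assert (Hdiff : Lambda_at r m n L M N - Lambda0 r m n = 4 / (27 * r ^ 2) * E).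
  { unfold Lambda_at, Lambda0, Lambda_form, mu_of, nu_of, E, b, c.
    field. repeat split; try lra; nra. }
  rewrite Hdiff.
  assert (Hk : 0 < 4 / (27 * r ^ 2)).
  { apply Rdiv_lt_0_compat; [lra|]. nra. }
  split.
  - nra.
  - assert (4 / (27 * r ^ 2) * E < 4 / (27 * r ^ 2) * (9 * s)) by nra.
    replace (4 / r * sigma) with (4 / (27 * r ^ 2) * (9 * s)); [lra|].
    unfold s; field; lra.
Qed.
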